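(* Let $(X,T)$ be a minimal system, $d\ge2$, and suppose the factor map $\pi:X\to Y=X_{eq}$ onto the maximal equicontinuous factor is almost one-to-one. Let $A=\{y\in X_{eq}:|\pi^{-1}(y)|\ge2\}$. (1) If $2A-A$ is of first category in $X_{eq}$, then $X_{eq}$ is a $2$-step topological characteristic factor of $X$ (saturation for $T\times T^2$). (2) If $d\ge3$ and $B_d:=\bigcup_{1\le i<j\le d}\left(\frac{j}{j-i}A-\frac{i}{j-i}A\right)$ is of first category, then $X_{eq}$ is a $d$-step topological characteristic factor of $X$ (saturation for $T\times T^2\times\cdots\times T^d$).
   Context: $X_{eq}$ is a compact abelian (monothetic) group on which $T$ acts as translation. For an abelian group $G$, $A\subset G$ and rational $r=p/q$, $rA=\{g\in G: qg=pa\text{ for some }a\in A\}$; $B-C=\{b-c:b\in B,c\in C\}$. $Y$ is a $d$-step topological characteristic factor of $X$ via $\pi$ if there is a dense $G_\delta$ set $\Omega\subset X$ such that for all $x\in\Omega$, $L_x=\overline{\{(T^nx,\dots,T^{dn}x):n\in\mathbb{Z}\}}$ satisfies $(\pi^{(d)})^{-1}(\pi^{(d)}(L_x))=L_x$, where $\pi^{(d)}=\pi\times\cdots\times\pi$. *)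

(* Defs.v *)
From HB Require Import structures.
From mathcomp Require Import all_boot all_order all_algebra.
From mathcomp Require Import all_classical all_reals all_analysis.
From mathcomp Require Import borel_hierarchy.
Set Implicit Arguments. Unset Strict Implicit. Unset Printing Implicit Defensive.
Import Order.TTheory GRing.Theory Num.Theory.
Import numFieldNormedType.Exports.
Local Open Scope classical_set_scope.
Local Open Scope ring_scope.

Definition iterz {X : Type} (T Ti : X -> X) (n : int) (x : X) : X :=
  match n with
  | Posz k => iter k T x
  | Negz k => iter k.+1 Ti x
  end.

Definition minimal_system {X : topologicalType} (T : X -> X) : Prop :=
  forall C : set X, closed C -> C !=set0 -> T @` C `<=` C -> C = setT.

Definition equicontinuous_sys {Z : uniformType} (S : Z -> Z) : Prop :=
  forall E, entourage E -> exists2 F, entourage F &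
    forall x y, F (x, y) -> forall n : nat, E (iter n S x, iter n S y).

Definition equicontinuous_factor {X : topologicalType} (T : X -> X)
  (Z : uniformType) (S : Z -> Z) (psi : X -> Z) : Prop :=
  [/\ compact [set: Z], hausdorff_space Z, continuous S, equicontinuous_sys S &
      [/\ continuous psi, (forall z, exists x, psi x = z) & forall x, psi (T x) = S (psi x)]].

Definition max_equicontinuous_factor {X : topologicalType} (T : X -> X)
  (Y : topologicalZmodType) (a : Y) (pi : X -> Y) : Prop :=
  [/\ compact [set: Y], hausdorff_space Y,
      [/\ continuous pi, (forall y, exists x, pi x = y) & forall x, pi (T x) = pi x + a] &
      forall (Z : uniformType) (S : Z -> Z) (psi : X -> Z),
        equicontinuous_factor T S psi ->
        exists phi : Y -> Z, continuous phi /\ forall x, psi x = phi (pi x)].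

Definition almost_one_to_one {X Y : topologicalType} (pi : X -> Y) : Prop :=
  exists Om : set X, [/\ Gdelta Om, dense Om &
    forall x, Om x -> pi @^-1` [set pi x] = [set x]].

Definition nowhere_dense {T : topologicalType} (S : set T) : Prop :=
  interior (closure S) = set0.

Definition first_category {T : topologicalType} (S : set T) : Prop :=
  exists F : (set T)^nat, (forall n, nowhere_dense (F n)) /\
    S `<=` \bigcup_n F n.

(** rA = {g : q g = p a for some a in A}, with r = p/q in lowest terms. *)
Definition scale_set {G : zmodType} (r : rat) (A : set G) : set G :=
  [set g | exists2 a, A a & g *~ denq r = a *~ numq r].

Definition set_sub {G : zmodType} (B C : set G) : set G :=
  [set g | exists b c, [/\ B b, C c & g = b - c]].

Definition B_set {G : zmodType} (d : nat) (A : set G) : set G :=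
  [set g | exists i j : nat, [/\ (1 <= i)%N, (i < j)%N, (j <= d)%N &
     set_sub (scale_set (j%:Q / (j - i)%N%:Q) A)
             (scale_set (i%:Q / (j - i)%N%:Q) A) g]].

Definition Lx {X : topologicalType} (T Ti : X -> X) (d : nat) (x : X)
  : set {ptws 'I_d -> X} :=
  closure (range (fun n : int =>
    (fun i : 'I_d => iterz T Ti ((i.+1)%:Z * n) x) : {ptws 'I_d -> X})).

Definition top_char_factor {X Y : topologicalType} (T Ti : X -> X)
  (pi : X -> Y) (d : nat) : Prop :=
  exists Om : set X, [/\ Gdelta Om, dense Om &
    forall x, Om x ->
      [set z : {ptws 'I_d -> X} | exists2 w, @Lx X T Ti d x w &
         (fun i => pi (w i)) = (fun i => pi (z i))] = @Lx X T Ti d x].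

(* Main.v *)
Require Import Defs.
From HB Require Import structures.
From mathcomp Require Import all_boot all_order all_algebra.
From mathcomp Require Import all_classical all_reals all_analysis.
Import Order.TTheory GRing.Theory Num.Theory.
Local Open Scope classical_set_scope.
Local Open Scope ring_scope.
Section TopGrp.
Context {Y : topologicalZmodType}.

Lemma contD {T : topologicalType} (f g : T -> Y) :
  continuous f -> continuous g -> continuous (fun x => f x + g x).
Proof.
move=> cf cg x.
apply: (@continuous_comp _ _ _ (fun x => (f x, g x)) (fun p : Y * Y => p.1 + p.2)).
  by apply: cvg_pair; [exact: cf|exact: cg].
exact: add_continuous.
Qed.

Lemma contN {T : topologicalType} (f : T -> Y) :
  continuous f -> continuous (fun x => - f x).
Proof.
move=> cf x; apply: (@continuous_comp _ _ _ f (fun u : Y => - u)).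
  exact: cf.
exact: opp_continuous.
Qed.

Lemma cont_natmul (m : nat) : continuous (fun u : Y => u *+ m).
Proof.
elim: m => [|m IH].
  have -> : (fun u : Y => u *+ 0) = (fun=> 0) by apply: funext => u; rewrite mulr0n.
  exact: cst_continuous.
have -> : (fun u : Y => u *+ m.+1) = (fun u => u + u *+ m).
  by apply: funext => u; rewrite mulrS.
by apply: contD => // x; exact: cvg_id.
Qed.

Lemma cont_affine (y : Y) k : continuous (fun u : Y => y + u *+ k).
Proof. by apply: contD => [h|]; [exact: cst_continuous|exact: cont_natmul]. Qed.

Lemma cont_transl (b : Y) : continuous (fun u : Y => u + b).
Proof. by apply: contD => x; [exact: cvg_id|exact: cst_continuous]. Qed.

Lemma open_transl (b : Y) (S : set Y) : open S -> open [set u | S (u + b)].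
Proof.
move=> oS; have -> : [set u | S (u + b)] = (fun u => u + b) @^-1` S by [].
by apply: open_comp => // x _; exact: cont_transl.
Qed.

Lemma closed_transl (b : Y) (S : set Y) : closed S -> closed [set u | S (u + b)].
Proof.
move=> cS; have -> : [set u | S (u + b)] = (fun u => u + b) @^-1` S by [].
by apply: preimage_closed => // x _; exact: cont_transl.
Qed.

Lemma compact_image_closed (f : Y -> Y) (C : set Y) :
  hausdorff_space Y -> compact [set: Y] -> continuous f -> closed C ->
  closed (f @` C).
Proof.
move=> hY cY cf cC; apply: compact_closed => //.
apply: continuous_compact.
  by apply: continuous_subspaceT.
exact: (subclosed_compact cC cY).
Qed.

End TopGrp.
Lemma box_nbhs (X : topologicalType) (d : nat) (z : {ptws 'I_d -> X}) (B : set {ptws 'I_d -> X}) :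
  nbhs z B -> exists U : 'I_d -> set X, (forall i, open (U i) /\ U i (z i)) /\
     (forall f : {ptws 'I_d -> X}, (forall i, U i (f i)) -> B f).
Proof.
pose F : set_system {ptws 'I_d -> X} := fun P => exists U : 'I_d -> set X, (forall i, open (U i) /\ U i (z i)) /\
     (forall f : {ptws 'I_d -> X}, (forall i, U i (f i)) -> P f).
have FF : Filter F.
  apply: Build_Filter.
  - by exists (fun=> setT); split => // i; split => //; exact: openT.
  - move=> P Q [U [UP HP]] [V [VP HV]]; exists (fun i => U i `&` V i); split.
      by move=> i; have [? ?] := UP i; have [? ?] := VP i; split => //; exact: openI.
    by move=> f Hf; split; [apply: HP => i; case: (Hf i)|apply: HV => i; case: (Hf i)].
  - by move=> P Q PQ [U [UP HP]]; exists U; split => // f /HP /PQ.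
suff : F --> z by move=> /(_ B).
apply/cvg_sup => i.
apply/cvg_image.
  apply/seteqP; split => // x _; exists (fun=> x) => //.
move=> N /= Nz.
have [W [[oW Wz] WN]] : exists W, (open W /\ W (z i)) /\ W `<=` N.
  by move: Nz; rewrite nbhsE => -[W [? ?] ?]; exists W.
exists [set f : {ptws 'I_d -> X} | N (f i)].
  exists (fun j => if j == i then W else setT); split.
    by move=> j; case: eqP => [->|_]; split => //; exact: openT.
  by move=> f /(_ i); rewrite eqxx => /WN.
apply/seteqP; split => [x [f Nf <-] //|x Nx].
by exists (fun=> x).
Qed.
Lemma baire_compact {X : uniformType} : compact [set: X] ->
  forall O : (set X)^nat, (forall n, open (O n) /\ dense (O n)) ->
  dense (\bigcap_n O n).
Proof.
move=> cX O hO W W0 oW.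
have step : forall (nW : nat * set X), exists W' : set X,
    open nW.2 -> nW.2 !=set0 ->
    [/\ open W', W' !=set0 & closure W' `<=` nW.2 `&` O nW.1].
  move=> [n V] /=.
  have [[oV V0]|] := pselect (open V /\ V !=set0); last first.
    by move=> h; exists setT => oV V0; exfalso; apply: h.
  have [p [Vp Op]] : (V `&` O n) !=set0 by case: (hO n) => _ /(_ V V0 oV).
  have nVO : nbhs p (V `&` O n).
    by apply: open_nbhs_nbhs; split => //; apply: openI => //; case: (hO n).
  have [N Np cN] := uniform_regular nVO.
  exists (interior N) => _ _; split.
  - exact: open_interior.
  - by exists p.
  - by apply: subset_trans cN; apply: closureS; exact: interior_subset.
have [f hf] := choice step.
pose Ws := fix Ws n := if n is k.+1 then f (k, Ws k) else W.
have Wsok : forall n, open (Ws n) /\ Ws n !=set0.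
  elim=> [|k [ok nk]] //=.
  by have [] := hf (k, Ws k) ok nk.
have Wsstep : forall k, closure (Ws k.+1) `<=` Ws k `&` O k.
  move=> k; have [ok nk] := Wsok k.
  by have [] := hf (k, Ws k) ok nk.
pose K n := closure (Ws n.+1).
have Kdec : forall m n, (m <= n)%N -> K n `<=` K m.
  move=> m n /subnK <-; elim: (n - m)%N => [|k IH] //=.
  rewrite addSn; apply: subset_trans IH.
  move=> z /Wsstep [] /subset_closure + _; exact.
pose F := filter_from [set: nat] K.
have FF : ProperFilter F.
  apply: filter_from_proper.
    apply: filter_from_filter; first by exists 0%N.
    move=> i j _ _; exists (maxn i j) => //.
    by move=> z Kz; split; apply: Kdec Kz; rewrite ?leq_maxl ?leq_maxr.
  move=> i _; have [_ [z wz]] := Wsok i.+1.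
  by exists z; apply: subset_closure.
have [p [_ clp]] := cX F FF (filterT).
rewrite clusterE in clp.
have Kp : forall n, K n p.
  move=> n; have : closure (K n) p by apply: clp; exists n.
  by rewrite -(closure_id (K n)).1 //; exact: closed_closure.
exists p; split.
  by have /Wsstep [] := Kp 0%N.
by move=> n _; have /Wsstep [] := Kp n.
Qed.
Lemma ratio_nd (n m a b g : nat) : (0 < g)%N -> (0 < b)%N -> coprime a b ->
  n = (a * g)%N -> m = (b * g)%N ->
  numq (n%:Q / m%:Q) = a%:Z /\ denq (n%:Q / m%:Q) = b%:Z.
Proof.
move=> g0 b0 cab -> ->.
have -> : ((a * g)%N%:Q / (b * g)%N%:Q) = (a%:Z)%:~R / (b%:Z)%:~R :> rat.
  rewrite !PoszM !intrM -mulf_div divff ?mulr1 //.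
  by rewrite intr_eq0 eqz_nat -lt0n.
split.
  by rewrite coprimeq_num // gtr0_sg ?mul1r // ltz_nat.
rewrite coprimeq_den //; case: eqP => [b00|_] //.
by move: b0; rewrite -[b]/(absz (Posz b)) b00.
Qed.

Lemma nt_facts (I J : nat) : (0 < I)%N -> (I < J)%N ->
  exists g p p' q : nat, [/\ (0 < g)%N, (0 < p')%N, (0 < q)%N,
    [/\ J = (p * g)%N, I = (p' * g)%N, (J - I)%N = (q * g)%N & (q + p')%N = p] &
    (J * p' = I * p)%N /\ [/\ coprime p p', coprime p q & coprime p' q]].
Proof.
move=> I0 IJ.
pose g := gcdn J I.
have g0 : (0 < g)%N by rewrite gcdn_gt0 I0 orbT.
have hJ : J = (J %/ g * g)%N by rewrite divnK // dvdn_gcdl.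
have hI : I = (I %/ g * g)%N by rewrite divnK // dvdn_gcdr.
have hJI : (J - I)%N = ((J - I) %/ g * g)%N.
  by rewrite divnK // dvdn_sub // ?dvdn_gcdl ?dvdn_gcdr.
exists g, (J %/ g)%N, (I %/ g)%N, ((J - I) %/ g)%N.
have qp : ((J - I) %/ g + I %/ g)%N = (J %/ g)%N.
  apply/eqP; rewrite -(eqn_pmul2r g0) mulnDl -hJI -hI -hJ subnK //.
  exact: ltnW.
have cpp : coprime (J %/ g) (I %/ g).
  rewrite /coprime -(eqn_pmul2r g0) muln_gcdl -hJ -hI mul1n.
  by [].
split => //; last split.
- by rewrite divn_gt0 // dvdn_leq // ?dvdn_gcdr.
- rewrite divn_gt0 //; apply: dvdn_leq; first by rewrite subn_gt0.
  by rewrite dvdn_sub // ?dvdn_gcdl ?dvdn_gcdr.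
- by rewrite {1}hJ {2}hI mulnAC [RHS]mulnAC (mulnC (J %/ g)%N).
- have cp'q : coprime (I %/ g) ((J - I) %/ g).
    by rewrite /coprime -gcdnDr qp gcdnC.
  split => //.
  by rewrite /coprime -qp gcdnC gcdnDl gcdnC.
Qed.

Section Main.
Context (R : realType) (X : pseudoMetricType R) (T Ti : X -> X)
  (Y : topologicalZmodType) (a : Y) (pi : X -> Y).
Hypotheses (cX : compact [set: X]) (hX : hausdorff_space X)
  (cT : continuous T) (cTi : continuous Ti) (TK : cancel T Ti) (TiK : cancel Ti T)
  (minT : minimal_system T) (cY : compact [set: Y]) (hY : hausdorff_space Y)
  (cpi : continuous pi) (spi : forall y, exists x, pi x = y)
  (piT : forall x, pi (T x) = pi x + a).
Variables (Om0 : set X).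
Hypotheses (dOm0 : dense Om0) (fOm0 : forall x, Om0 x -> pi @^-1` [set pi x] = [set x]).

Let A := [set y : Y | exists x1 x2 : X, [/\ x1 <> x2, pi x1 = y & pi x2 = y]].
Let V (U : set X) := [set s : Y | forall x, pi x = s -> U x].

Lemma pi_iter n x : pi (iter n T x) = pi x + a *+ n.
Proof.
elim: n => [|n IH]; first by rewrite addr0.
by rewrite iterS piT IH mulrSr addrA.
Qed.

Lemma pi_Ti x : pi (Ti x) = pi x - a.
Proof. by rewrite -{2}(TiK x) piT addrK. Qed.

Lemma pi_iterz m x : pi (iterz T Ti m x) = pi x + a *~ m.
Proof.
case: m => [n|n] /=; first by rewrite pi_iter.
elim: n => [|n IH]; first by rewrite /= pi_Ti NegzE mulrNz.
rewrite iterS pi_Ti IH !NegzE !mulrNz -addrA -opprD; congr (_ - _).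
by rewrite -!pmulrn [in RHS]mulrSr.
Qed.

Lemma V_open U : open U -> open (V U).
Proof.
move=> oU.
have -> : V U = ~` (pi @` (~` U)).
  apply/seteqP; split => [s Vs [x nUx pix]|s nI x pix].
    by apply: nUx; apply: Vs.
  by apply: contra_notP nI => nUx; exists x.
rewrite openC; apply: compact_closed => //.
apply: continuous_compact; first exact: continuous_subspaceT.
apply: (subclosed_compact _ cX) => //.
by rewrite closedC.
Qed.

Lemma orbit_dense x (W : set X) : open W -> W !=set0 ->
  exists n, W (iter n T x).
Proof.
move=> oW [w Ww].
pose C := closure (range (fun n => iter n T x)).
have CT : C = setT.
  apply: minT; first exact: closed_closure.
    by exists x; apply: subset_closure; exists 0%N.
  move=> _ [c Cc <-] B nB.
  have nB' : nbhs c (T @^-1` B) by apply: cT.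
  have [_ [[n _ <-] hB]] := Cc _ nB'.
  by exists (iter n.+1 T x); split => //; exists n.+1.
have : C w by rewrite CT.
move=> /(_ W (open_nbhs_nbhs (conj oW Ww))) [_ [[n _ <-] Wn]].
by exists n.
Qed.

Lemma Ydense (u : Y) (Q : set Y) : nbhs u Q -> exists n : nat, Q (a *+ n).
Proof.
move=> nQ; have [x0 px0] := spi 0; have [xu pxu] := spi u.
have oW : open (pi @^-1` interior Q).
  by apply: open_comp; [move=> z _; exact: cpi|exact: open_interior].
have [|n Wn] := orbit_dense x0 _ oW; first by exists xu; rewrite /= pxu.
exists n; apply: interior_subset; move: Wn; rewrite /= pi_iter px0 add0r.
by [].
Qed.


Let mY (m : nat) := [set s : Y | exists v, s = v *+ m].

Lemma mY_closed m : closed (mY m).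
Proof.
have -> : mY m = (fun u => u *+ m) @` setT.
  by apply/seteqP; split => [s [v ->]|s [v _ <-]]; [exists v|exists v].
apply: compact_image_closed => //; solve [exact: cont_natmul | exact: closedT].
Qed.

Let cu (P : nat -> Prop) (m k : nat) :=
  [set s : Y | exists r, [/\ (r < k)%N, P r & exists v, s = a *+ r + v *+ m]].

Lemma closed_cu P m k : closed (cu P m k).
Proof.
elim: k => [|k IH].
  have -> : cu P m 0 = set0 by apply/seteqP; split => // s [r []].
  exact: closed0.
have [Pk|nPk] := pselect (P k).
  have -> : cu P m k.+1 = cu P m k `|` [set s | mY m (s + - (a *+ k))].
    apply/seteqP; split => s.
      move=> [r [+ Pr [v ->]]]; rewrite ltnS leq_eqVlt => /orP [/eqP ->|rk].
        by right; exists v; rewrite addrAC subrr add0r.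
      by left; exists r; split => //; exists v.
    move=> [[r [rk Pr hv]]|[v hv]].
      by exists r; split => //; exact: ltnW.
    exists k; split => //; exists v.
    by rewrite -hv addrC subrK.
  by apply: closedU => //; apply: closed_transl; exact: mY_closed.
have -> : cu P m k.+1 = cu P m k => //.
apply/seteqP; split => s [r [+ Pr hv]].
  rewrite ltnS leq_eqVlt => /orP [/eqP rk|rk]; first by rewrite rk in Pr.
  by exists r.
by move=> rk; exists r; split => //; exact: ltnW.
Qed.

Lemma cosets_all m : (0 < m)%N -> forall u : Y,
  exists r, (r < m)%N /\ exists v, u = a *+ r + v *+ m.
Proof.
move=> m0 u; apply: contrapT => hu.
have nu : (~` cu (fun=> True) m m) u.
  by move=> [r [rm _ hv]]; apply: hu; exists r.
have : nbhs u (~` cu (fun=> True) m m).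
  by apply: open_nbhs_nbhs; split => //; rewrite openC; exact: closed_cu.
move=> /Ydense [n]; apply.
exists (n %% m)%N; split => //; first by rewrite ltn_mod.
exists (a *+ (n %/ m)); rewrite -mulrnA -mulrnDr.
by rewrite addnC -divn_eq.
Qed.

Lemma mY_open m : (0 < m)%N -> open (mY m).
Proof.
move=> m0; rewrite -closedC.
suff -> : ~` mY m = cu (fun r => ~ mY m (a *+ r)) m m by exact: closed_cu.
apply/seteqP; split => s.
  move=> ns; have [r [rm [v hv]]] := cosets_all m m0 s.
  exists r; split => //; last by exists v.
  move=> [w hw]; apply: ns; exists (w + v).
  by rewrite hv hw mulrnDl.
move=> [r [rm nr [v hv]]] [w hw]; apply: nr; exists (w - v).
by rewrite mulrnBl -hw hv addrK.
Qed.

Lemma open_map_natmul m (O : set Y) (t : Y) : (0 < m)%N -> open O -> O t ->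
  exists N : set Y, [/\ open N, N (t *+ m) &
    forall s, N s -> exists2 t', O t' & t' *+ m = s].
Proof.
move=> m0 oO Ot.
pose C := [set c : Y | forall o, O o -> c *+ m <> o *+ m].
have cC : closed C.
  rewrite -openC.
  have -> : ~` C = \bigcup_(k in [set k : Y | k *+ m = 0]) [set c | O (c + - k)].
    apply/seteqP; split => c.
      move=> /existsNP [ w1 /not_implyP [Oo /contrapT hco]].
      exists (c - w1); first by rewrite /= mulrnBl hco subrr.
      by rewrite /= opprB addrC subrK.
    move=> [k /= k0 Ock] hC; apply: (hC _ Ock).
    by rewrite mulrnDl mulNrn k0 subr0.
  by apply: bigcup_open => k _; exact: open_transl.
pose Cm := (fun u => u *+ m) @` C.
have cCm : closed Cm by apply: compact_image_closed => //; exact: cont_natmul.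
exists (~` Cm `&` mY m); split.
- by apply: openI; [rewrite openC|exact: mY_open].
- split; last by exists t.
  by move=> [c Cc hc]; exact: (Cc t Ot hc).
- move=> s [nCm [v hv]].
  have : ~ C v by move=> Cv; apply: nCm; exists v.
  move=> /existsNP [ w1 /not_implyP [Oo /contrapT hvo]].
  by exists w1 => //; rewrite hv hvo.
Qed.

Lemma A_shift1 s : A s -> A (s + a).
Proof.
move=> [x1 [x2 [nx p1 p2]]]; exists (T x1), (T x2); split.
- by move=> /(can_inj TK).
- by rewrite piT p1.
- by rewrite piT p2.
Qed.

Lemma A_shift s n : A s -> A (s + a *+ n).
Proof.
move=> As; elim: n => [|n IH]; first by rewrite addr0.
by rewrite mulrSr addrA; exact: A_shift1.
Qed.

Lemma cont_ev d (i : 'I_d) : continuous (fun f : {ptws 'I_d -> X} => pi (f i)).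
Proof.
move=> f; apply: (@continuous_comp _ _ _ (fun g : {ptws 'I_d -> X} => g i) pi).
  exact: (@proj_continuous _ (fun=> X) i f).
exact: cpi.
Qed.

Lemma good_V (U : set X) (z : X) : U z -> ~ A (pi z) -> V U (pi z).
Proof.
move=> Uz nA x' hx'; apply: contrapT => nU; apply: nA.
exists x', z; split => //; by move=> e; apply: nU; rewrite e.
Qed.

Lemma sat_main d x : (0 < d)%N ->
  (forall (t : Y) (i j : 'I_d), i != j ->
     A (pi x + t *+ i.+1) -> A (pi x + t *+ j.+1) -> False) ->
  [set z : {ptws 'I_d -> X} | exists2 w, @Lx X T Ti d x w &
         (fun i => pi (w i)) = (fun i => pi (z i))] = @Lx X T Ti d x.
Proof.
move=> d0 Hgood.
apply/seteqP; split; last by move=> z Lz; exists z.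
move=> z [w Lw ew].
set y := pi x.
pose i0 : 'I_d := Ordinal d0.
pose Pset := [set f : {ptws 'I_d -> X} |
  forall i : 'I_d, pi (f i) - (y + (pi (f i0) - y) *+ i.+1) = 0].
have cP : closed Pset.
  have -> : Pset = \bigcap_(i in setT) [set f : {ptws 'I_d -> X} |
      pi (f i) - (y + (pi (f i0) - y) *+ i.+1) = 0].
    by apply/seteqP; split => f hf i; [move=> _; exact: hf|exact: hf].
  apply: closed_bigI => i _.
  have -> : [set f : {ptws 'I_d -> X} | pi (f i) - (y + (pi (f i0) - y) *+ i.+1) = 0]
     = (fun f : {ptws 'I_d -> X} => pi (f i) - (y + (pi (f i0) - y) *+ i.+1)) @^-1` [set 0].
    by [].
  apply: preimage_closed; last exact: (accessible_closed_set1 (hausdorff_accessible hY)).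
  move=> f _; apply: contD; first exact: cont_ev.
  apply: contN; apply: contD; first by move=> g; exact: cst_continuous.
  move=> g; apply: (@continuous_comp _ _ _ (fun g : {ptws 'I_d -> X} => pi (g i0) - y)
     (fun u => u *+ i.+1)); last exact: cont_natmul.
  by apply: contD; [exact: cont_ev| move=> h; exact: cst_continuous].
have LP : @Lx X T Ti d x `<=` Pset.
  rewrite /Lx (closure_id Pset).1 //; apply: closureS.
  move=> _ [n _ <-] i /=.
  rewrite !pi_iterz -/y mul1r [y + a *~ n]addrC addrK.
  by rewrite pmulrn mulrzA_C subrr.
set t := pi (w i0) - y.
have zt : forall i : 'I_d, pi (z i) = y + t *+ i.+1.
  move=> i; have := LP w Lw i; rewrite /= => /eqP; rewrite subr_eq0 => /eqP <-.
  by have := congr1 (fun h => h i) ew.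
move=> B /box_nbhs [U [hU hB]].
suff [t' ht'] : exists t' : Y, forall i : 'I_d, V (U i) (y + t' *+ i.+1).
  have nQ : nbhs t' [set u | forall i : 'I_d, V (U i) (y + u *+ i.+1)].
    apply: filter_forall => i.
    have : nbhs (y + t' *+ i.+1) (V (U i)).
      by apply: open_nbhs_nbhs; split => //; apply: V_open; case: (hU i).
    exact: (cont_affine y i.+1 t').
  have [n Qn] := Ydense _ _ nQ.
  exists (fun i : 'I_d => iterz T Ti ((i.+1)%:Z * n%:Z) x); split.
    by exists n%:Z.
  apply: hB => i; apply: (Qn i).
  by rewrite pi_iterz -/y -PoszM -pmulrn -mulrnA mulnC.
have [[k Ak]|nob] := pselect (exists k : 'I_d, A (y + t *+ k.+1)); last first.
  exists t => i; rewrite -zt; apply: good_V; first by case: (hU i).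
  by rewrite zt => Ai; apply: nob; exists i.
have goodi : forall i : 'I_d, i != k -> ~ A (y + t *+ i.+1).
  by move=> i ik Ai; apply: (Hgood t i k ik Ai Ak).
pose O := [set u : Y | forall i : 'I_d, i != k -> V (U i) (y + u *+ i.+1)].
have nO : nbhs t O.
  apply: filter_forall => i.
  have [->|ik] := eqVneq i k; first by apply: nearW => u; case/negP.
  have : nbhs (y + t *+ i.+1) (V (U i)).
    apply: open_nbhs_nbhs; split; first by apply: V_open; case: (hU i).
    rewrite -zt; apply: good_V; first by case: (hU i).
    by rewrite zt; exact: goodi.
  move=> /(cont_affine y i.+1 t) h.
  apply: (@filterS _ (nbhs t) _ ((fun u => y + u *+ i.+1) @^-1` V (U i))) => //.
have [N [oN Nt hN]] := open_map_natmul k.+1 (interior O) t (ltn0Sn k) (open_interior O) nO.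
pose W' := [set v : Y | N (v + - y)].
have oU' : open (U k `&` pi @^-1` W').
  apply: openI; first by case: (hU k).
  by apply: open_comp; [move=> h _; exact: cpi|exact: open_transl].
have U'z : (U k `&` pi @^-1` W') (z k).
  split; first by case: (hU k).
  by rewrite /W' /= zt addrC addKr.
have [x' [[Ukx' W'x'] Om0x']] := dOm0 _ (ex_intro _ _ U'z) oU'.
have Vx' : V (U k) (pi x').
  move=> x'' hx''.
  have : (pi @^-1` [set pi x']) x'' by [].
  by rewrite fOm0 // => ->.
have [t' Ot' ht'] := hN _ W'x'.
exists t' => i.
have [->|ik] := eqVneq i k.
  by rewrite ht' addrC subrK.
by apply: (interior_subset Ot').
Qed.
Let piece (I J : nat) := set_sub (scale_set (J%:Q / (J - I)%N%:Q) A)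
  (scale_set (I%:Q / (J - I)%N%:Q) A).

Lemma piece_shiftN I J s : (0 < I)%N -> (I < J)%N -> piece I J s -> piece I J (s - a).
Proof.
move=> I0 IJ.
have [g [p [p' [q [g0 p'0 q0 [hJ hI hJI qp] [hJp [cpp' cpq cp'q]]]]]]] := nt_facts I J I0 IJ.
have [nJ dJ] := ratio_nd _ _ _ _ _ g0 q0 cpq hJ hJI.
have [nI dI] := ratio_nd _ _ _ _ _ g0 q0 cp'q hI hJI.
rewrite /piece /set_sub /scale_set nJ dJ nI dI.
move=> [b [c [[a1 Aa1 hb] [a2 Aa2 hc] ->]]].
have [km kn hk _] := egcdnP p p'0.
move: hk; rewrite gcdnC (eqP cpp') => hk.
exists (b + a *+ (kn * p)), (c + a *+ (km * p')); split.
- exists (a1 + a *+ (q * kn)); first exact: A_shift.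
  move: hb; rewrite -!pmulrn => hb.
  by rewrite !mulrnDl hb -!mulrnA mulnC mulnA.
- exists (a2 + a *+ (q * km)); first exact: A_shift.
  move: hc; rewrite -!pmulrn => hc.
  by rewrite !mulrnDl hc -!mulrnA mulnC mulnA.
- rewrite hk addn1 mulrSr opprD addrA opprD !addrA; congr (_ - _).
  by rewrite addrAC addrK.
Qed.

Lemma piece_core I J y t : (0 < I)%N -> (I < J)%N ->
  A (y + t *+ I) -> A (y + t *+ J) -> piece I J y.
Proof.
move=> I0 IJ A1 A2.
have [g [p [p' [q [g0 p'0 q0 [hJ hI hJI qp] [hJp [cpp' cpq cp'q]]]]]]] := nt_facts I J I0 IJ.
have [r [rq [v hv]]] := cosets_all q q0 (- (y + t *+ J)).
have hw : (- v) *+ q = (y + a *+ r) + t *+ J.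
  have hv' : v *+ q = - (y + t *+ J) - a *+ r.
    by apply: (addrI (a *+ r)); rewrite -hv [RHS]addrC subrK.
  by rewrite mulNrn hv' opprB opprK addrCA addrA.
suff : piece I J (y + a *+ r).
  elim: r {rq hv hw} => [|r IH]; first by rewrite addr0.
  move=> h; apply: IH; move: (piece_shiftN I J _ I0 IJ h).
  by rewrite mulrSr addrA addrK.
have [nJ dJ] := ratio_nd _ _ _ _ _ g0 q0 cpq hJ hJI.
have [nI dI] := ratio_nd _ _ _ _ _ g0 q0 cp'q hI hJI.
have A1' : A ((y + a *+ r) + t *+ I) by rewrite addrAC; exact: A_shift.
have A2' : A ((- v) *+ q) by rewrite hw addrAC; exact: A_shift.
move: (y + a *+ r) (- v) hw A1' A2' => y' w hw A1' A2'.
rewrite /piece /set_sub /scale_set nJ dJ nI dI.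
exists (y' + w *+ p'), (w *+ p'); split; last by rewrite addrK.
- exists (y' + t *+ I) => //.
  rewrite -!pmulrn mulrnDl -mulrnA mulnC mulrnA hw mulrnDl -mulrnA hJp.
  by rewrite addrA -mulrnDr qp mulrnA -mulrnDl.
- exists (w *+ q) => //.
  by rewrite -!pmulrn -!mulrnA mulnC.
Qed.

Lemma Om0_V (U : set X) x' : Om0 x' -> U x' -> V U (pi x').
Proof.
move=> Ox Ux x'' hx''.
have : (pi @^-1` [set pi x']) x'' by [].
by rewrite fOm0 // => ->.
Qed.

Lemma char_factor d (Bd : set Y) : (0 < d)%N -> first_category Bd ->
  (forall x, ~ Bd (pi x) -> forall (t : Y) (i j : 'I_d), i != j ->
     A (pi x + t *+ i.+1) -> A (pi x + t *+ j.+1) -> False) ->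
  top_char_factor T Ti pi d.
Proof.
move=> d0 [F [ndF covF]] HB.
pose G n := ~` closure (F n).
pose Om := \bigcap_n (pi @^-1` G n).
have oG : forall n, open (pi @^-1` G n).
  move=> n; apply: open_comp; first by move=> z _; exact: cpi.
  by rewrite openC; exact: closed_closure.
exists Om; split.
- by exists (fun n => pi @^-1` G n).
- apply: baire_compact => // n; split => //.
  move=> W [w Ww] oW.
  have [x' [Wx' Om0x']] := dOm0 _ (ex_intro _ w Ww) oW.
  have Vx' := Om0_V W x' Om0x' Wx'.
  have [s [Vs Gs]] : (V W `&` G n) !=set0.
    apply: contrapT => hne.
    have : interior (closure (F n)) (pi x').
      apply: (@filterS _ _ _ (V W)).
        move=> s Vs; apply: contrapT => ncl; apply: hne; by exists s.
      by apply: open_nbhs_nbhs; split => //; exact: V_open.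
    by rewrite ndF.
  have [x'' px''] := spi s.
  by exists x''; split; [apply: Vs | rewrite /= px''].
- move=> x Omx; apply: sat_main => //.
  apply: HB => /covF [n _ Fn].
  by apply: (Omx n Logic.I); apply: subset_closure.
Qed.

Lemma B_good d x : ~ B_set d A (pi x) -> forall (t : Y) (i j : 'I_d), i != j ->
     A (pi x + t *+ i.+1) -> A (pi x + t *+ j.+1) -> False.
Proof.
move=> nB t i j ij.
wlog lt : i j ij / (i < j)%N.
  move=> H; case: (ltngtP i j) => [h|h|h].
  - exact: H.
  - by move=> Ai Aj; apply: (H j i) => //; rewrite eq_sym.
  - by move: ij; rewrite (val_inj h) eqxx.
move=> Ai Aj; apply: nB; exists i.+1, j.+1; split => //.
idtac.
exact: (piece_core i.+1 j.+1 (pi x) t (ltn0Sn i) _ Ai Aj).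
Qed.

Lemma B2_sub y : B_set 2 A y -> set_sub (scale_set 2%:Q A) A y.
Proof.
move=> [i [j [i1 ij j2]]].
have -> : i = 1%N by apply/eqP; rewrite eqn_leq i1 -ltnS (leq_trans ij j2).
have -> : j = 2%N by apply/eqP; rewrite eqn_leq j2 (leq_trans _ ij) ?ltnS.
rewrite (_ : (2%:Q / (2 - 1)%N%:Q) = 2%:Q); last by rewrite subn1 /= divr1.
rewrite (_ : (1%:Q / (2 - 1)%N%:Q) = 1); last by rewrite subn1 /= divr1.
move=> [b [c [Bb [a0 Aa0 hc] ->]]]; exists b, c; split => //.
by move: hc; rewrite /= !mulr1z => ->.
Qed.

End Main.

Theorem theorem6p2 (R : realType) (X : pseudoMetricType R) (T Ti : X -> X)
  (Y : topologicalZmodType) (a : Y) (pi : X -> Y) :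
  compact [set: X] -> hausdorff_space X ->
  continuous T -> continuous Ti -> cancel T Ti -> cancel Ti T ->
  minimal_system T ->
  max_equicontinuous_factor T a pi ->
  almost_one_to_one pi ->
  let A := [set y : Y | exists x1 x2 : X, [/\ x1 <> x2, pi x1 = y & pi x2 = y]] in
  (first_category (set_sub (scale_set 2%:Q A) A) -> top_char_factor T Ti pi 2)
  /\
  (forall d : nat, (3 <= d)%N -> first_category (B_set d A) ->
     top_char_factor T Ti pi d).
Proof.
move=> cX hX cT cTi TK TiK minT [cY hY [cpi spi piT] _] [Om0 [_ dOm0 fOm0]] A.
split.
- move=> fc.
  apply: (@char_factor R X T Ti Y a pi cX cT TiK minT cY hY cpi spi piT Om0 dOm0 fOm0
     2 (set_sub (scale_set 2%:Q A) A) (ltn0Sn 1) fc).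
  move=> x nB; apply: B_good => // hB; apply: nB; exact: B2_sub.
- move=> d d3 fc.
  apply: (@char_factor R X T Ti Y a pi cX cT TiK minT cY hY cpi spi piT Om0 dOm0 fOm0
     d (B_set d A) _ fc).
    exact: leq_trans d3.
  by move=> x nB; apply: B_good.
Qed.
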